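(* Let $U$ be a nonempty finite set, $R$ a relation on $U$, $M(R)$ the relation matroid induced by $R$, and $R(M(R))$ the relation induced by $M(R)$. Then $R(M(R))=R$ if and only if $R$ is an equivalence relation.
   Context: For $x\in U$, $RS_R(x)=\{y\in U:(x,y)\in R\}$. $\mathbf{I}(R)=\{X\subseteq U: \forall x,y\in X,\ x\neq y \Rightarrow RS_R(x)\neq RS_R(y)\}$; this is the family of independent sets of a matroid $M(R)=(U,\mathbf{I}(R))$, called the relation matroid induced by $R$. For a matroid $M$ on $U$ with family of circuits (minimal dependent sets) $\mathbf{C}(M)$, the relation induced by $M$ is $R(M)$ given by $x\,R(M)\,y \iff x=y$ or $\{x,y\}\in\mathbf{C}(M)$. *)

(* Defs.v *)
From mathcomp Require Import all_boot.
Set Implicit Arguments. Unset Strict Implicit. Unset Printing Implicit Defensive.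

Section RelMatroid.
Variable U : finType.

Definition RS (R : rel U) (x : U) : {set U} := [set y | R x y].

Definition rm_indep (R : rel U) (X : {set U}) : bool :=
  [forall x in X, forall y in X, (x != y) ==> (RS R x != RS R y)].

Definition is_circuit (indep : pred {set U}) (C : {set U}) : bool :=
  ~~ indep C && [forall D : {set U}, (D \proper C) ==> indep D].

Definition rel_of_matroid (indep : pred {set U}) : rel U :=
  fun x y => (x == y) || is_circuit indep [set x; y].

Definition rel_of_rel_matroid (R : rel U) : rel U :=
  rel_of_matroid (rm_indep R).

End RelMatroid.

(* Main.v *)
Require Import Defs.
From mathcomp Require Import all_boot.

Lemma indep_small (U : finType) (R : rel U) (D : {set U}) :
  #|D| <= 1 -> rm_indep R D.
Proof.
move/card_le1_eqP => H; apply/forallP => a; apply/implyP => Ha.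
apply/forallP => b; apply/implyP => Hb; apply/implyP => nab.
by rewrite (H a b Ha Hb) eqxx in nab.
Qed.

Lemma rel_ofE (U : finType) (R : rel U) x y :
  rel_of_rel_matroid R x y = (RS R x == RS R y).
Proof.
rewrite /rel_of_rel_matroid /rel_of_matroid.
have [->|nxy] := eqVneq x y; first by rewrite eqxx.
rewrite /= /is_circuit.
have -> : [forall D : {set U}, (D \proper [set x; y]) ==> rm_indep R D].
  apply/forallP => D; apply/implyP => /proper_card.
  rewrite cards2 nxy => HD; exact: indep_small.
rewrite andbT.
apply/idP/idP.
- move/forallPn => [a]; rewrite negb_imply => /andP [Ha].
  move/forallPn => [b]; rewrite negb_imply => /andP [Hb].
  rewrite negb_imply negbK => /andP [nab /eqP Eab].
  move: Ha Hb nab Eab; rewrite !inE => /orP [] /eqP -> /orP [] /eqP ->;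
    rewrite ?eqxx //= => _ E; rewrite ?E //.
- move=> /eqP E; apply/forallPn; exists x; rewrite negb_imply setU11 /=.
  apply/forallPn; exists y; rewrite negb_imply !inE eqxx orbT /= nxy /=.
  by rewrite E eqxx.
Qed.

Theorem mainTheorem17 (U : finType) (HU : 0 < #|U|) (R : rel U) :
  rel_of_rel_matroid R =2 R <->
  [/\ reflexive R, symmetric R & transitive R].
Proof.
split.
- move=> H; split.
  + by move=> x; rewrite -H rel_ofE.
  + by move=> x y; rewrite -H rel_ofE eq_sym -rel_ofE H.
  + move=> y x z; rewrite -!H !rel_ofE => /eqP -> /eqP ->; exact: eqxx.
- move=> [Rr Rs Rt] x y; rewrite rel_ofE.
  apply/idP/idP.
  + move/eqP => E; have : y \in RS R y by rewrite inE Rr.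
    by rewrite -E inE.
  + move=> Rxy; apply/eqP/setP => z; rewrite !inE.
    apply/idP/idP => H.
    * apply: (Rt x) => //; by rewrite Rs.
    * exact: (Rt y).
Qed.
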